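(* Let $(\mathbb{V},\Omega)$ be a base-normed space with closed cone $K$ and base $\Omega$, and let $\Omega_o$ be a closed convex subset of $\Omega$. Then the cone $K_o=\{ta:a\in\Omega_o,t\ge0\}$ generated by $\Omega_o$ is closed. Moreover, if $\mathbb{V}$ is complete in its base norm, then $\mathbb{V}_o=K_o-K_o$ is complete in the base norm generated by $\Omega_o$.
   Context: A base-normed space $(\mathbb{V},\Omega)$: $\Omega$ is a convex subset of a real vector space such that every nonzero element of $K=\{t\alpha:t\ge0,\alpha\in\Omega\}$ has a unique representation $t\alpha$, $t>0$, $\alpha\in\Omega$ (equivalently there is a linear functional $u$ with $u\equiv1$ on $\Omega$); $\mathbb{V}=K-K$; and the Minkowski functional $\|x\|=\inf\{t\ge0:x\in t\,\mathrm{conv}(\Omega\cup-\Omega)\}$ is a norm (the base norm). Closedness refers to the base-norm topology of $\mathbb{V}$. The base norm generated by $\Omega_o$ on $\mathbb{V}_o$ is the Minkowski functional of $\mathrm{conv}(\Omega_o\cup-\Omega_o)$. *)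

(* Defs.v *)
From mathcomp Require Import all_boot all_order all_algebra.
From mathcomp Require Import boolp classical_sets reals.
Set Implicit Arguments. Unset Strict Implicit. Unset Printing Implicit Defensive.
Import Order.TTheory GRing.Theory Num.Theory.
Local Open Scope ring_scope.
Local Open Scope classical_set_scope.

Section BaseNorm.
Variables (R : realType) (V : lmodType R).

Definition convex_set (S : set V) : Prop :=
  forall x y (t : R), S x -> S y -> 0 <= t -> t <= 1 -> S (t *: x + (1 - t) *: y).

Definition conv (S : set V) : set V :=
  [set x | exists (n : nat) (l : 'I_n -> R) (p : 'I_n -> V),
     (forall i, 0 <= l i) /\ \sum_(i < n) l i = 1 /\ (forall i, S (p i)) /\
     x = \sum_(i < n) l i *: p i].

Definition cone (S : set V) : set V :=
  [set x | exists (t : R) (a : V), 0 <= t /\ S a /\ x = t *: a].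

Definition diffset (A : set V) : set V :=
  [set x | exists a b, A a /\ A b /\ x = a - b].

Definition minkowski (C : set V) (x : V) : R :=
  inf [set t : R | 0 <= t /\ exists c, C c /\ x = t *: c].

Definition base_norm (Om : set V) : V -> R :=
  minkowski (conv (Om `|` [set - a | a in Om])).

(* p is a (finite-valued) norm on V, where finiteness means the Minkowski
   infimum is over a nonempty set *)
Definition is_norm_on (W : set V) (C : set V) : Prop :=
  (forall x, W x -> exists t : R, 0 <= t /\ exists c, C c /\ x = t *: c) /\
  (forall x, W x -> minkowski C x = 0 -> x = 0) /\
  (forall (a : R) x, W x -> minkowski C (a *: x) = `|a| * minkowski C x) /\
  (forall x y, W x -> W y -> minkowski C (x + y) <= minkowski C x + minkowski C y).

Definition base_normed (Om : set V) : Prop :=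
  convex_set Om /\
  (forall k, cone Om k -> k != 0 ->
     exists! tp : R * V, 0 < tp.1 /\ Om tp.2 /\ k = tp.1 *: tp.2) /\
  (forall x : V, diffset (cone Om) x) /\
  is_norm_on setT (conv (Om `|` [set - a | a in Om])).

Definition closed_wrt (p : V -> R) (S : set V) : Prop :=
  forall x, ~ S x -> exists e : R, 0 < e /\ forall y, p (y - x) < e -> ~ S y.

Definition complete_wrt (p : V -> R) (W : set V) : Prop :=
  forall u : nat -> V, (forall n, W (u n)) ->
    (forall e : R, 0 < e -> exists N, forall m n, (N <= m)%N -> (N <= n)%N ->
        p (u m - u n) < e) ->
    exists x, W x /\ forall e : R, 0 < e -> exists N, forall n, (N <= n)%N ->
        p (u n - x) < e.

End BaseNorm.

(* Main.v *)
Require Import Defs.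
From mathcomp Require Import all_boot all_order all_algebra.
From mathcomp Require Import boolp classical_sets reals.
From mathcomp Require Import lra ring.
Set Implicit Arguments. Unset Strict Implicit. Unset Printing Implicit Defensive.
Import Order.TTheory GRing.Theory Num.Theory.
Local Open Scope ring_scope.
Local Open Scope classical_set_scope.

Section H.
Variables (R : realType) (V : lmodType R).
Implicit Types (S Om : set V).

Lemma cone_add S (cS : convex_set S) (l m : R) b p : 0 <= l -> 0 <= m -> S b -> S p ->
  exists b', S b' /\ l *: b + m *: p = (l + m) *: b'.
Proof.
move=> l0 m0 Sb Sp.
have [lm0|lm0] := eqVneq (l + m) 0.
  move/eqP: (lm0); rewrite paddr_eq0 // => /andP[/eqP -> /eqP ->].
  by exists b; split => //; rewrite !addr0 !scale0r addr0.
have lmp : 0 < l + m by rewrite lt_def lm0 /=; lra.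
exists ((l / (l + m)) *: b + (1 - l / (l + m)) *: p); split.
  apply: cS => //; first by apply: divr_ge0 => //; lra.
  by rewrite ler_pdivrMr // mul1r lerDl.
rewrite scalerDr !scalerA; congr (_ *: _ + _ *: _).
  by field.
by field.
Qed.

Local Notation symm S := (S `|` [set - a | a in S]).

Lemma group_conv S (cS : convex_set S) b0 (Sb0 : S b0) n (l : 'I_n -> R) (p : 'I_n -> V) :
  (forall i, 0 <= l i) -> (forall i, symm S (p i)) ->
  exists lam mu b b', [/\ 0 <= lam, 0 <= mu, lam + mu = \sum_(i < n) l i, S b /\ S b' &
     \sum_(i < n) l i *: p i = lam *: b - mu *: b'].
Proof.
elim: n l p => [|n IH] l p l0 pS.
  exists 0, 0, b0, b0; split => //; first by rewrite big_ord0 addr0.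
  by rewrite big_ord0 !scale0r subr0.
have [lam [mu [b [b' [lam0 mu0 lsum [Sb Sb'] psum]]]]] :=
  IH (fun i => l (widen_ord (leqnSn n) i)) (fun i => p (widen_ord (leqnSn n) i))
     (fun i => l0 _) (fun i => pS _).
rewrite !big_ord_recr /= psum -lsum.
case: (pS ord_max) => [Sp|[a Sa <-]].
  have [w [Sw Hw]] := cone_add cS lam0 (l0 ord_max) Sb Sp.
  exists (lam + l ord_max), mu, w, b'; split => //; first exact: addr_ge0.
    by rewrite addrAC.
  by rewrite addrAC Hw.
have [w [Sw Hw]] := cone_add cS mu0 (l0 ord_max) Sb' Sa.
exists lam, (mu + l ord_max), b, w; split => //; first by rewrite addr_ge0.
  by rewrite addrA.
by rewrite -Hw scalerN opprD addrA.
Qed.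


Definition Mset (C : set V) (x : V) := [set t : R | 0 <= t /\ exists c, C c /\ x = t *: c].

Lemma minkE C x : minkowski C x = inf (Mset C x). Proof. by []. Qed.

Lemma Mset_lb C x : has_lbound (Mset C x).
Proof. by exists 0 => t [t0 _]. Qed.

Lemma mink_le C x t : Mset C x t -> minkowski C x <= t.
Proof. by move=> h; rewrite minkE; apply: ge_inf => //; apply: Mset_lb. Qed.

Lemma mink_ge0 C x : Mset C x !=set0 -> 0 <= minkowski C x.
Proof. by move=> h; rewrite minkE; apply: lb_le_inf => // t [t0 _]. Qed.

Lemma conv1 S a : S a -> conv S a.
Proof.
move=> Sa; exists 1%N, (fun _ => 1), (fun _ => a); split => //; split; first by rewrite big_ord1.
by split => //; rewrite big_ord1 scale1r.
Qed.

Lemma conv2 S a b (t : R) : 0 <= t -> t <= 1 -> S a -> S b -> conv S (t *: a + (1 - t) *: b).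
Proof.
move=> t0 t1 Sa Sb.
exists 2%N, (fun i : 'I_2 => if val i == 0%N then t else 1 - t),
  (fun i : 'I_2 => if val i == 0%N then a else b).
split; first by move=> i; case: ifP => _; lra.
split; first by rewrite !big_ord_recl big_ord0 /=; lra.
split; first by move=> i; case: ifP.
by rewrite !big_ord_recl big_ord0 /= addr0.
Qed.

Lemma conv_pt S c : conv (symm S) c -> exists b, S b.
Proof.
case=> [[|n]] [l [p [l0 [ls [pS _]]]]].
  by move: ls; rewrite big_ord0 => /esym/eqP; rewrite oner_eq0.
case: (pS ord0) => [Sp|[a Sa _]]; by eexists; eauto.
Qed.

Lemma Mset_rep S (cS : convex_set S) a b (s r : R) : 0 <= s -> 0 <= r -> S a -> S b ->
  Mset (conv (symm S)) (s *: a - r *: b) (s + r).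
Proof.
move=> s0 r0 Sa Sb; split; first by rewrite addr_ge0.
have [sr0|sr0] := eqVneq (s + r) 0.
  move/eqP: (sr0); rewrite paddr_eq0 // => /andP[/eqP -> /eqP ->].
  exists a; split; first by apply: conv1; left.
  by rewrite !scale0r subr0 addr0 scale0r.
have srp : 0 < s + r by rewrite lt_def sr0 /=; lra.
exists ((s / (s + r)) *: a + (1 - s / (s + r)) *: - b); split.
  apply: conv2; [by apply: divr_ge0 => //; lra| |by left|by right; exists b].
  by rewrite ler_pdivrMr // mul1r lerDl.
rewrite scalerDr !scalerA scalerN; congr (_ *: _ - _ *: _); by field.
Qed.

Lemma mink_rep S (cS : convex_set S) x (e : R) : Mset (conv (symm S)) x !=set0 ->
  minkowski (conv (symm S)) x < e ->
  exists s r a b, [/\ 0 <= s, 0 <= r, s + r < e, S a /\ S b & x = s *: a - r *: b].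
Proof.
move=> ne; rewrite minkE => /(inf_lt ne) [t [t0 [c [cc ->]]] te].
have [b0 Sb0] := conv_pt cc.
case: cc => n [l [p [l0 [ls [pS ->]]]]].
have [lam [mu [b [b' [lam0 mu0 lsum [Sb Sb'] psum]]]]] := group_conv cS Sb0 l0 pS.
exists (t * lam), (t * mu), b, b'; split => //; try exact: mulr_ge0.
  by rewrite -mulrDr lsum ls mulr1.
by rewrite psum scalerBr !scalerA.
Qed.

End H.

Section BN.
Variables (R : realType) (V : lmodType R) (Om : set V).
Hypothesis bOm : base_normed Om.
Local Notation bn := (base_norm Om).

Lemma bn_hom (a : R) x : bn (a *: x) = `|a| * bn x.
Proof. by case: bOm => _ [_ [_ [_ [_ [h _]]]]]; apply: h. Qed.

Lemma bn_tri x y : bn (x + y) <= bn x + bn y.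
Proof. by case: bOm => _ [_ [_ [_ [_ [_ h]]]]]; apply: h. Qed.

Lemma bn_def x : bn x = 0 -> x = 0.
Proof. by case: bOm => _ [_ [_ [_ [h _]]]]; apply: h. Qed.

Lemma bn_ge0 x : 0 <= bn x.
Proof.
case: bOm => _ [_ [_ [h _]]]; apply: mink_ge0.
by have [t [t0 [c [cc xc]]]] := h x I; exists t; split => //; exists c.
Qed.

Lemma bn_N x : bn (- x) = bn x.
Proof. by rewrite -scaleN1r bn_hom normrN1 mul1r. Qed.

Lemma bn_rev x y : `|bn y - bn x| <= bn (y - x).
Proof.
have h1 : bn y <= bn (y - x) + bn x by rewrite -{1}(subrK x y) bn_tri.
have h2 : bn x <= bn (y - x) + bn y.
  by rewrite -(bn_N (y - x)) opprB -{1}(subrK y x) bn_tri.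
rewrite ler_norml; apply/andP; split; lra.
Qed.

Lemma uniq_rep t1 a1 t2 a2 : 0 < t1 -> 0 < t2 -> Om a1 -> Om a2 ->
  t1 *: a1 = t2 *: a2 -> t1 *: a1 != 0 -> t1 = t2.
Proof.
move=> t1p t2p O1 O2 e nz.
case: bOm => _ [U _].
have [tp [_ Hu]] := U (t1 *: a1) (ex_intro _ t1 (ex_intro _ a1 (conj (ltW t1p) (conj O1 erefl)))) nz.
have E1 := Hu (t1, a1) (conj t1p (conj O1 erefl)).
have E2 := Hu (t2, a2) (conj t2p (conj O2 e)).
by rewrite E1 in E2; case: E2.
Qed.

Lemma triv : Om 0 -> forall x : V, x = 0.
Proof.
move=> O0.
have allz : forall a, Om a -> a = 0.
  move=> a Oa; apply/eqP/negPn/negP => anz.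
  case: (bOm) => cO _.
  have Ow := cO a 0 (1/2) Oa O0 ltac:(lra) ltac:(lra).
  have := @uniq_rep 1 a 2 _ ltr01 ltac:(lra) Oa Ow.
  rewrite scaler0 addr0 scalerA scale1r.
  have -> : (2 * (1 / 2) : R) = 1 by field.
  rewrite scale1r => /(_ erefl anz) h12; lra.
move=> x; case: bOm => _ [_ [sp _]].
have [k1 [k2 [[t1 [a1 [_ [O1 ->]]]] [[t2 [a2 [_ [O2 ->]]]] ->]]]] := sp x.
by rewrite (allz _ O1) (allz _ O2) !scaler0 subr0.
Qed.

Lemma key a : ~ Om 0 -> Om a -> bn a = 1.
Proof.
move=> nO0 Oa; case: (bOm) => cO _.
apply/eqP; rewrite eq_le; apply/andP; split.
  apply: mink_le; split => //; exists a; split; last by rewrite scale1r.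
  by apply: conv1; left.
apply: lb_le_inf; first by exists 1; split => //; exists a; split;
  [apply: conv1; left | rewrite scale1r].
move=> t [t0 [c [cc ac]]].
case: cc ac => n [l [p [l0 [ls [pS ->]]]]] ac.
have [lam [mu [b [b' [lam0 mu0 lsum [Sb Sb'] psum]]]]] := group_conv cO Oa l0 pS.
rewrite psum ls in ac lsum.
have tmu0 : 0 <= t * mu by apply: mulr_ge0.
have tlam0 : 0 <= t * lam by apply: mulr_ge0.
have [w [Ow Hw]] := cone_add cO ler01 tmu0 Oa Sb'.
have E : (1 + t * mu) *: w = (t * lam) *: b.
  by rewrite -Hw scale1r {1}ac scalerBr !scalerA subrK.
have wnz : (1 + t * mu) *: w != 0.
  rewrite scaler_eq0 negb_or; apply/andP; split; first by rewrite lt0r_neq0 // ltr_pwDl.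
  by apply/eqP => w0; apply: nO0; rewrite -w0.
have tlamp : 0 < t * lam.
  rewrite lt_def tlam0 andbT; apply/eqP => tl0.
  by move: wnz; rewrite E tl0 scale0r eqxx.
have h1p : 0 < 1 + t * mu by rewrite ltr_pwDl.
have := uniq_rep h1p tlamp Ow Sb E wnz.
have : t = t * lam + t * mu by rewrite -mulrDr lsum mulr1.
clear -tmu0 tlam0; move: (t * mu) (t * lam) tmu0 tlam0 => A B A0 B0 h1 h2.
lra.
Qed.

Lemma bn_cone a (t : R) : ~ Om 0 -> Om a -> 0 <= t -> bn (t *: a) = t.
Proof. by move=> n0 Oa t0; rewrite bn_hom key // mulr1 ger0_norm. Qed.

End BN.

Section P1.
Variables (R : realType) (V : lmodType R) (Om Omo : set V).
Hypotheses (bOm : base_normed Om) (nO0 : ~ Om 0) (sub : Omo `<=` Om)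
  (clO : closed_wrt (base_norm Om) Omo).
Local Notation bn := (base_norm Om).

Lemma cone_closed : closed_wrt bn (cone Omo).
Proof.
move=> x nx.
case: (pselect (exists a, Omo a)) => [[a0 Oa0]|nO]; last first.
  exists 1; split => // y _ [t [a [_ [Oa _]]]]; apply: nO; by exists a.
have xnz : x != 0.
  apply/eqP => x0; apply: nx; exists 0, a0; split => //; split => //.
  by rewrite scale0r.
set s := bn x.
have sp : 0 < s.
  rewrite lt_def bn_ge0 // andbT; apply/eqP => s0; move/eqP: xnz; apply.
  exact: (bn_def bOm).
have sn0 : s != 0 by rewrite lt0r_neq0.
set z := s^-1 *: x.
have nz : ~ Omo z.
  move=> Oz; apply: nx; exists s, z; split; first exact: ltW.
  by split => //; rewrite /z scalerA divff ?scale1r.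
have [e0 [e0p He0]] := clO nz.
exists (e0 * s / 2); split; first by apply: divr_gt0 => //; apply: mulr_gt0.
move=> y hy [t [a [t0 [Oa ey]]]].
apply: (He0 a _ Oa).
have Ea : a - z = s^-1 *: (t *: a - x) + (s^-1 * (s - t)) *: a.
  rewrite scalerBr scalerA mulrBr scalerBl mulVf // scale1r.
  by rewrite /z [RHS]addrC [RHS]addrA addrNK.
rewrite Ea.
apply: (le_lt_trans (bn_tri bOm _ _)).
rewrite !(bn_hom bOm) (key bOm nO0 (sub Oa)) mulr1 normrM.
have si0 : 0 < s^-1 by rewrite invr_gt0.
rewrite (gtr0_norm si0).
have hB : bn (t *: a - x) < e0 * s / 2 by rewrite -ey.
have hD : `|s - t| <= bn (t *: a - x).
  by rewrite distrC -{1}(bn_cone bOm nO0 (sub Oa) t0); apply: bn_rev.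
have ss : s * s^-1 = 1 by rewrite divff.
move: (bn (t *: a - x)) (`|s - t|) (s^-1) hB hD ss si0 => B D si.
clear -sp e0p; move=> *; nra.
Qed.

End P1.

Section Geo.
Variable R : realType.

Lemma geo (m n : nat) : (m <= n)%N ->
  \sum_(m <= j < n) ((1/2 : R) ^+ j) = 2 * (1/2) ^+ m - 2 * (1/2) ^+ n.
Proof.
move=> mn.
rewrite (@telescope_sumr_eq _ _ _ (fun k => - (2 * (1/2 : R) ^+ k))) //.
  by rewrite opprK addrC.
move=> k _; rewrite exprS.
move: ((1/2 : R) ^+ k) => y; lra.
Qed.

Lemma halfpow_small (e : R) : 0 < e -> exists N, (1/2 : R) ^+ N < e.
Proof.
move=> e0.
have := archi_boundP (ltW (eqbRL (invr_gt0 e) e0)); set N := Num.bound _ => hN.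
exists N.
have h2 : (N%:R : R) < (2 ^ N)%:R by rewrite ltr_nat ltn_expl.
have M0 : (0 : R) < (2 ^ N)%:R by rewrite ltr0n expn_gt0.
have -> : (1/2 : R) ^+ N = ((2 ^ N)%:R)^-1 by rewrite natrX div1r exprVn.
by rewrite invf_plt ?posrE // (lt_trans hN h2).
Qed.

Lemma halfpow_ge0 n : 0 <= (1/2 : R) ^+ n.
Proof. by apply: exprn_ge0; lra. Qed.

Lemma halfpow_le m n : (m <= n)%N -> (1/2 : R) ^+ n <= (1/2) ^+ m.
Proof. by move=> mn; apply: ler_wiXn2l => //; lra. Qed.

End Geo.

Section P2.
Variables (R : realType) (V : lmodType R) (Om Omo : set V).
Hypotheses (bOm : base_normed Om) (nO0 : ~ Om 0) (sub : Omo `<=` Om)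
  (cOo : convex_set Omo) (clC : closed_wrt (base_norm Om) (cone Omo))
  (comp : complete_wrt (base_norm Om) setT).
Local Notation bn := (base_norm Om).

Lemma conesum (s : nat -> R) (a : nat -> V) x0 : Omo x0 ->
  (forall j, 0 <= s j) -> (forall j, Omo (a j)) -> forall r : seq nat,
  exists b, Omo b /\ \sum_(j <- r) s j *: a j = (\sum_(j <- r) s j) *: b.
Proof.
move=> Ox0 s0 aO; elim => [|i r [b [Ob e]]].
  by exists x0; rewrite !big_nil scale0r.
rewrite !big_cons e.
have sg : 0 <= \sum_(j <- r) s j by apply: sumr_ge0.
have [w [Ow ->]] := cone_add cOo (s0 i) sg (aO i) Ob.
by exists w.
Qed.

Lemma series (s : nat -> R) (a : nat -> V) : (forall j, 0 <= s j) -> (forall j, Omo (a j)) ->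
  (forall j, s j <= (1/2) ^+ j) ->
  exists P, forall J, exists t b, [/\ 0 <= t, t <= 2 * (1/2) ^+ J, Omo b &
     P - \sum_(j < J) s j *: a j = t *: b].
Proof.
move=> s0 aO sb.
pose S n := \sum_(j < n) s j *: a j.
have Sdiff : forall m n, (m <= n)%N -> S n - S m = \sum_(m <= j < n) s j *: a j.
  move=> m n mn; rewrite /S -!(big_mkord xpredT (fun j => s j *: a j)) (@big_cat_nat _ _ _ m 0 n) //=.
  by rewrite addrAC subrr add0r.
have Snorm : forall m n, (m <= n)%N ->
    bn (S n - S m) <= 2 * (1/2) ^+ m - 2 * (1/2) ^+ n /\ cone Omo (S n - S m).
  move=> m n mn; rewrite Sdiff //.
  have [b [Ob ->]] := conesum (aO 0%N) s0 aO (index_iota m n).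
  have sg0 : 0 <= \sum_(m <= j < n) s j by apply: sumr_ge0.
  rewrite (bn_cone bOm nO0 (sub Ob) sg0); split.
    by rewrite -geo //; apply: ler_sum => j _; apply: sb.
  by exists (\sum_(m <= j < n) s j), b.
have cauchy : forall e : R, 0 < e -> exists N, forall m n, (N <= m)%N -> (N <= n)%N ->
    bn (S m - S n) < e.
  move=> e ep; have e2 : 0 < e / 2 by apply: divr_gt0.
  have [N HN] := halfpow_small e2.
  exists N => m n Nm Nn.
  have key2 : forall p q, (N <= p)%N -> (p <= q)%N -> bn (S q - S p) < e.
    move=> p q Np pq; have [h _] := Snorm p q pq.
    have := halfpow_le R Np; have := halfpow_ge0 R q.
    move: h HN; move: (bn _) ((1/2 : R) ^+ p) ((1/2 : R) ^+ q) ((1/2 : R) ^+ N) => A B C D.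
    move=> *; lra.
  case: (leqP m n) => mn.
    by rewrite -(bn_N bOm) opprB; apply: key2.
  by apply: key2 => //; apply: ltnW.
have [P [_ HP]] := comp (fun _ => I) cauchy.
exists P => J.
have TJc : cone Omo (P - S J).
  apply: contrapT => nc; have [e [ep He]] := clC nc; have [N HN] := HP e ep.
  apply: (He (S (maxn N J) - S J)); last exact: (Snorm _ _ (leq_maxr _ _)).2.
  by rewrite opprB addrA subrK; apply: HN; rewrite leq_maxl.
case: TJc => t [b [t0 [Ob eT]]].
exists t, b; split => //.
rewrite -(bn_cone bOm nO0 (sub Ob) t0) -eT.
apply/ler_addgt0Pr => e ep; have [N HN] := HP e ep.
set n := maxn N J.
have [h _] := Snorm J n (leq_maxr _ _).
have h2 := HN n (leq_maxl _ _).
have -> : P - S J = (P - S n) + (S n - S J) by rewrite addrA subrK.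
apply: (le_trans (bn_tri bOm _ _)).
rewrite -(bn_N bOm (P - S n)) opprB.
have := halfpow_ge0 R n.
move: h h2; move: (bn (S n - P)) (bn (S n - S J)) ((1/2 : R) ^+ J) ((1/2 : R) ^+ n) => A B C D.
move=> *; lra.
Qed.

End P2.

Lemma idz (G : zmodType) (a b c p q : G) : (a - b + c) - (c + p - q) = (q - b) - (p - a).
Proof.
by rewrite -[c + p - q]addrA addrKA !opprB addrACA [RHS]addrACA (addrC q).
Qed.
Lemma idd (G : zmodType) (k1 k2 k3 k4 : G) : (k1 - k2) - (k3 - k4) = (k1 + k4) - (k2 + k3).
Proof. by rewrite opprB addrACA opprD (addrC (-k2)). Qed.
Lemma ida (G : zmodType) (k1 k2 p q : G) : (k1 - k2) + p - q = (k1 + p) - (k2 + q).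
Proof. by rewrite opprD addrA (addrAC k1). Qed.
Lemma idp (G : zmodType) (x1 y1 x2 y2 : G) : (x1 - y1) + (x2 - y2) = (x1 + x2) - (y1 + y2).
Proof. by rewrite addrACA opprD. Qed.

Fixpoint runmax (f : nat -> nat) j := if j is j'.+1 then maxn (runmax f j') (f j) else f 0%N.
Lemma runmax_ge f j : (f j <= runmax f j)%N.
Proof. by case: j => //= j; exact: leq_maxr. Qed.
Lemma runmax_mono f : {homo runmax f : i j / (i <= j)%N}.
Proof. by apply: homo_leq => //; [exact: leq_trans| move=> i /=; exact: leq_maxl]. Qed.

Section W.
Variables (R : realType) (V : lmodType R) (S : set V).
Hypothesis cS : convex_set S.
Local Notation W := (diffset (cone S)).

Lemma cone_plus k1 k2 : cone S k1 -> cone S k2 -> cone S (k1 + k2).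
Proof.
move=> [t1 [a1 [t10 [O1 ->]]]] [t2 [a2 [t20 [O2 ->]]]].
have [w [Ow ->]] := cone_add cS t10 t20 O1 O2.
by exists (t1 + t2), w; split => //; apply: addr_ge0.
Qed.

Lemma W_sub x y : W x -> W y -> W (x - y).
Proof.
move=> [k1 [k2 [c1 [c2 ->]]]] [k3 [k4 [c3 [c4 ->]]]].
by exists (k1 + k4), (k2 + k3); split; [|split]; [apply: cone_plus..|rewrite idd].
Qed.

Lemma W_add x p q : W x -> cone S p -> cone S q -> W (x + p - q).
Proof.
move=> [k1 [k2 [c1 [c2 ->]]]] cp cq.
by exists (k1 + p), (k2 + q); split; [|split]; [apply: cone_plus..|rewrite ida].
Qed.

Lemma W_Mset x : W x -> Mset (conv (S `|` [set - a | a in S])) x !=set0.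
Proof.
move=> [k1 [k2 [[t1 [a1 [t10 [O1 ->]]]] [[t2 [a2 [t20 [O2 ->]]]] ->]]]].
by exists (t1 + t2); apply: Mset_rep.
Qed.

End W.

Unset Implicit Arguments.

Theorem lemmaC9 (R : realType) (V : lmodType R) (Om Omo : set V) :
  base_normed Om ->
  closed_wrt (base_norm Om) (cone Om) ->
  Omo `<=` Om -> convex_set Omo -> closed_wrt (base_norm Om) Omo ->
  closed_wrt (base_norm Om) (cone Omo) /\
  (complete_wrt (base_norm Om) setT ->
   complete_wrt (base_norm Omo) (diffset (cone Omo))).
Proof.
move=> bOm clK sub cOo clO.
case: (pselect (Om 0)) => [O0|nO0].
  have tv := triv bOm O0.
  split.
    by move=> x nx; exists 1; split => // y _; rewrite (tv y) -(tv x).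
  move=> _ u uW _; exists (u 0%N); split => // e ep; exists 0%N => n _.
  rewrite (tv (u n - u 0%N)).
  have [k1 [k2 [[t1 [a1 [_ [O1 _]]]] _]]] := uW 0%N.
  have := Mset_rep cOo (lexx 0) (lexx 0) O1 O1.
  rewrite !scale0r subr0 addr0 => h.
  exact: le_lt_trans (mink_le h) ep.
have clC := cone_closed bOm nO0 sub clO.
split => // comp u uW uC.
set bo := base_norm Omo.
have hp : forall j : nat, 0 < (1/2 : R) ^+ j by move=> j; apply: exprn_gt0; lra.
case: (choice (fun j => uC _ (hp j))) => Nf HNf.
pose phi := runmax Nf.
have phiN : forall J n, (phi J <= n)%N -> (Nf J <= n)%N.
  by move=> J n h; apply: leq_trans (runmax_ge Nf J) h.
pose d j := u (phi j.+1) - u (phi j).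
have dW : forall j, diffset (cone Omo) (d j) by move=> j; apply: W_sub.
have hrep : forall j, exists q : (R * R) * (V * V),
    [/\ 0 <= q.1.1, 0 <= q.1.2, q.1.1 + q.1.2 < (1/2)^+j, Omo q.2.1 /\ Omo q.2.2 &
        d j = q.1.1 *: q.2.1 - q.1.2 *: q.2.2].
  move=> j.
  have hb : bo (d j) < (1/2) ^+ j.
    apply: HNf; last exact: runmax_ge.
    by apply: phiN; apply: runmax_mono; apply: leqnSn.
  have [s [r [a [b [s0 r0 sr [Oa Ob] ed]]]]] := mink_rep cOo (W_Mset cOo (dW j)) hb.
  by exists ((s, r), (a, b)).
case: (choice hrep) => q Hq.
pose s j := (q j).1.1. pose r j := (q j).1.2. pose a j := (q j).2.1. pose b j := (q j).2.2.
have s0 : forall j, 0 <= s j by move=> j; case: (Hq j).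
have r0 : forall j, 0 <= r j by move=> j; case: (Hq j).
have aO : forall j, Omo (a j) by move=> j; case: (Hq j) => _ _ _ [].
have bO : forall j, Omo (b j) by move=> j; case: (Hq j) => _ _ _ [].
have sb : forall j, s j <= (1/2) ^+ j.
  move=> j; case: (Hq j) => _ _ sr _ _; apply: ltW; apply: le_lt_trans sr.
  by rewrite /s lerDl; case: (Hq j).
have rb : forall j, r j <= (1/2) ^+ j.
  move=> j; case: (Hq j) => _ _ sr _ _; apply: ltW; apply: le_lt_trans sr.
  by rewrite /r lerDr; case: (Hq j).
have [P HP] := @series _ _ _ _ bOm nO0 sub cOo clC comp s a s0 aO sb.
have [Q HQ] := @series _ _ _ _ bOm nO0 sub cOo clC comp r b r0 bO rb.
have PC : cone Omo P.
  have [t [c [t0 _ Oc e]]] := HP 0%N.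
  by rewrite big_ord0 subr0 in e; exists t, c.
have QC : cone Omo Q.
  have [t [c [t0 _ Oc e]]] := HQ 0%N.
  by rewrite big_ord0 subr0 in e; exists t, c.
exists (u (phi 0%N) + P - Q); split; first by apply: W_add.
move=> e ep.
have e5 : 0 < e / 5 by apply: divr_gt0.
have [J HJ] := halfpow_small e5.
exists (phi J) => n hn.
have hb : bo (u n - u (phi J)) < (1/2)^+J.
  by apply: HNf; [exact: phiN | exact: runmax_ge].
have [s1 [r1 [a1 [b1 [s10 r10 sr1 [Oa1 Ob1] e1]]]]] :=
  mink_rep cOo (W_Mset cOo (W_sub cOo (uW n) (uW _))) hb.
have [t1 [c1 [t10 t1b Oc1 E1]]] := HP J.
have [t2 [c2 [t20 t2b Oc2 E2]]] := HQ J.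
have tel : u (phi J) - u (phi 0%N) = \sum_(j < J) s j *: a j - \sum_(j < J) r j *: b j.
  rewrite -sumrB -(big_mkord xpredT (fun j => s j *: a j - r j *: b j)).
  rewrite -(@telescope_sumr _ 0 J (fun k => u (phi k)) (leq0n J)).
  by apply: eq_bigr => j _; case: (Hq j).
have uJ : u (phi J) = \sum_(j < J) s j *: a j - \sum_(j < J) r j *: b j + u (phi 0%N).
  by rewrite -tel subrK.
have E : u n - (u (phi 0%N) + P - Q) = (s1 *: a1 + t2 *: c2) - (r1 *: b1 + t1 *: c1).
  have -> : u n - (u (phi 0%N) + P - Q) =
      (u n - u (phi J)) + (u (phi J) - (u (phi 0%N) + P - Q)) by rewrite addrA subrK.
  by rewrite {2}uJ idz E1 E2 e1 idp.
rewrite E.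
have [w1 [Ow1 ->]] := cone_add cOo s10 t20 Oa1 Oc2.
have [w2 [Ow2 ->]] := cone_add cOo r10 t10 Ob1 Oc1.
have sa : 0 <= s1 + t2 by apply: addr_ge0.
have sb2 : 0 <= r1 + t1 by apply: addr_ge0.
apply: le_lt_trans (mink_le (Mset_rep cOo sa sb2 Ow1 Ow2)) _.
move: sr1 t1b t2b HJ s10 r10 t10 t20; move: ((1/2 : R) ^+ J) => h.
move=> *; lra.
Qed.
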